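(* In the setting described in the context, for every $i$ with $1\le i<m-1$, $\Phi(p_i,p_{i+1})\le 2\cdot L_1(\overline{p}_i,\overline{q}_i)$.
   Context: $P$ is a finite set of points in the plane, $s,t\in P$ distinct, and coordinates are chosen so that $t=(0,0)$ and $s$ lies in $C_2^t$ below the line $\ell_t^-=\{x+y=0\}$. Cones: $C_0^v=\{x\ge v_x,y\le v_y\}$, $C_1^v=\{x\ge v_x,y\ge v_y\}$, $C_2^v=\{x\le v_x,y\ge v_y\}$, $C_3^v=\{x\le v_x,y\le v_y\}$ with bisector directions $(1,-1),(1,1),(-1,1),(-1,-1)$. The $\Theta_4$-graph of $P$ has, for each $v\in P$ and cone $C_i^v$ containing a point of $P\setminus\{v\}$, a directed edge from $v$ to a point $w$ of $(P\setminus\{v\})\cap C_i^v$ minimizing the projection of $w-v$ onto the bisector direction (the neighbour of $v$ in $C_i^v$). For a point $p$, $\ell_p^+$ is the line through $p$ of slope $+1$, and $\overline{p}$ denotes the intersection point of $\ell_t^-$ and $\ell_p^+$. $L_1$ denotes the $L_1$ distance. Algorithm: for a vertex $v$, let $T(v,\ell_t^-)=C_1^v\cap\{x+y\le0\}$ if $v_x+v_y<0$, $T(v,\ell_t^-)=C_3^v\cap\{x+y\ge0\}$ if $v_x+v_y>0$, and $\{v\}$ if $v_x+v_y=0$; $v$ is clean if $T(v,\ell_t^-)$ contains no point of $P$ other than $v$. Starting at $v=s$, while $v\ne t$: if $v$ is not clean, take a sweeping step (go to the neighbour of $v$ in $C_1^v$, resp. $C_3^v$); otherwise take a greedy step (go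 to the neighbour of $v$ in the cone $C_i^v$ containing $t$). Let $(p_1,q_1),\dots,(p_{m-1},q_{m-1})$ be, in order, the edges traversed by greedy steps, and set $p_m=t$. Potential: for $1\le i<m-1$, $\Phi(p_i,p_{i+1})=L_1(p_i,q_i)+L_1(q_i,\overline{p}_{i+1})-L_1(p_i,\overline{p}_i)$. *)

(* Defs.v *)
From HB Require Import structures.
From mathcomp Require Import all_boot all_order all_algebra.
Set Implicit Arguments. Unset Strict Implicit. Unset Printing Implicit Defensive.
Import Order.TTheory GRing.Theory Num.Theory.
Local Open Scope ring_scope.

Section Theta4.
Variable R : realFieldType.
Notation pt := (R * R)%type.

Definition L1 (a b : pt) : R := `|a.1 - b.1| + `|a.2 - b.2|.

Definition inC (i : 'I_4) (v w : pt) : bool :=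
  match val i with
  | 0 => (v.1 <= w.1) && (w.2 <= v.2)
  | 1 => (v.1 <= w.1) && (v.2 <= w.2)
  | 2 => (w.1 <= v.1) && (v.2 <= w.2)
  | _ => (w.1 <= v.1) && (w.2 <= v.2)
  end.

(* projection of w - v onto the bisector direction of C_i
   ((1,-1),(1,1),(-1,1),(-1,-1)); unnormalised, which does not affect minimisation *)
Definition bproj (i : 'I_4) (v w : pt) : R :=
  match val i with
  | 0 => (w.1 - v.1) - (w.2 - v.2)
  | 1 => (w.1 - v.1) + (w.2 - v.2)
  | 2 => - (w.1 - v.1) + (w.2 - v.2)
  | _ => - (w.1 - v.1) - (w.2 - v.2)
  end.

Definition is_nb (P : seq pt) (v : pt) (i : 'I_4) (w : pt) : Prop :=
  [/\ w \in P, w != v, inC i v w &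
      forall u, u \in P -> u != v -> inC i v u -> bproj i v w <= bproj i v u].

Definition theta4_graph (P : seq pt) (nb : pt -> 'I_4 -> pt) : Prop :=
  forall v i, v \in P ->
    (exists u, [/\ u \in P, u != v & inC i v u]) -> is_nb P v i (nb v i).

(* the region T(v, l_t^-) with l_t^- = {x + y = 0} *)
Definition inT (v u : pt) : bool :=
  if v.1 + v.2 < 0 then inC (inord 1) v u && (u.1 + u.2 <= 0)
  else if 0 < v.1 + v.2 then inC (inord 3) v u && (0 <= u.1 + u.2)
  else u == v.

Definition clean (P : seq pt) (v : pt) : bool :=
  all (fun u => (u == v) || ~~ inT v u) P.

Definition sweep_cone (v : pt) : 'I_4 :=
  if v.1 + v.2 < 0 then inord 1 else inord 3.

Definition route_step (P : seq pt) (nb : pt -> 'I_4 -> pt) (t : pt)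
    (v w : pt) : bool :=
  (v != t) &&
  (if clean P v then [exists i : 'I_4, inC i v t && (w == nb v i)]
   else w == nb v (sweep_cone v)).

Definition greedy_edges (P : seq pt) (s : pt) (vs : seq pt) : seq (pt * pt) :=
  [seq e <- zip (s :: vs) vs | clean P e.1].

(* \overline{p}: intersection of l_t^- = {x+y=0} with the slope +1 line through p *)
Definition bar (p : pt) : pt := ((p.1 - p.2) / 2%:R, (p.2 - p.1) / 2%:R).

Definition Phi (pi qi pi1 : pt) : R :=
  L1 pi qi + L1 qi (bar pi1) - L1 pi (bar pi).

End Theta4.

(* Main.v *)
Require Import Defs.
From HB Require Import structures.
From mathcomp Require Import all_boot all_order all_algebra.
From mathcomp Require Import lra.
Import Order.TTheory GRing.Theory Num.Theory.
Local Open Scope ring_scope.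
Set Implicit Arguments. Unset Strict Implicit.

Ltac splitabs := repeat match goal with |- context[ `|?e| ] => case: (ger0P e) => ? end.

Section Aux.
Variable R : realFieldType.
Implicit Types (P : seq (R * R)) (nb : R * R -> 'I_4 -> R * R) (p q v w t : R * R).

Definition Inv (q v : R * R) : Prop :=
  if q.1 + q.2 < 0 then [/\ q.1 <= v.1, q.2 <= v.2 & v.1 + v.2 <= 0]
  else if 0 < q.1 + q.2 then [/\ v.1 <= q.1, v.2 <= q.2 & 0 <= v.1 + v.2]
  else v = q.

Lemma Inv_refl q : Inv q q.
Proof. rewrite /Inv; case: ifP => H1; first by split; lra.
case: ifP => H2 //; split; lra. Qed.

Lemma Inv_L1 q v : Inv q v -> L1 q (bar v) <= `|q.1 + q.2|.
Proof.
rewrite /Inv /L1 /bar /=; case: ifP => H1.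
  by case=> *; splitabs; lra.
case: ifP => H2.
  by case=> *; splitabs; lra.
by move=> ->; splitabs; lra.
Qed.

Lemma nonclean_wit P v : ~~ clean P v -> exists2 u, u \in P & (u != v) && inT v u.
Proof. rewrite /clean => /allPn [u uP]; rewrite negb_or negbK => H; by exists u. Qed.

Lemma inC1 v u : inC (inord 1) v u = (v.1 <= u.1) && (v.2 <= u.2).
Proof. by rewrite /inC /= inordK. Qed.
Lemma inC3 v u : inC (inord 3) v u = (u.1 <= v.1) && (u.2 <= v.2).
Proof. by rewrite /inC /= inordK. Qed.
Lemma bproj1 v u : bproj (inord 1) v u = (u.1 - v.1) + (u.2 - v.2).
Proof. by rewrite /bproj /= inordK. Qed.
Lemma bproj3 v u : bproj (inord 3) v u = - (u.1 - v.1) - (u.2 - v.2).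
Proof. by rewrite /bproj /= inordK. Qed.

Lemma nonclean_facts P v : ~~ clean P v ->
  exists2 w, w \in P & w != v /\
   ((v.1 + v.2 < 0 /\ sweep_cone v = inord 1 /\ inC (inord 1) v w /\ w.1 + w.2 <= 0)
   \/ (0 < v.1 + v.2 /\ sweep_cone v = inord 3 /\ inC (inord 3) v w /\ 0 <= w.1 + w.2)).
Proof.
move=> /nonclean_wit [w wP /andP [wv wT]]; exists w => //; split => //.
move: wT; rewrite /inT /sweep_cone.
case: ifP => H1; first by case/andP => *; left.
case: ifP => H2; first by case/andP => *; right.
by move/eqP => E; rewrite E eqxx in wv.
Qed.

Lemma sweep_nb P nb v : theta4_graph P nb -> v \in P -> ~~ clean P v ->
  is_nb P v (sweep_cone v) (nb v (sweep_cone v)).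
Proof.
move=> th vP /nonclean_facts [w wP [wv H]]; apply: th => //.
exists w; split => //.
by case: H => [[_ [-> [? _]]] | [_ [-> [? _]]]].
Qed.

Lemma Inv_step P nb q v : theta4_graph P nb -> v \in P -> ~~ clean P v -> Inv q v ->
  Inv q (nb v (sweep_cone v)).
Proof.
move=> th vP ncl Iv.
have [_ _ Cv' Min] := sweep_nb th vP ncl.
have [w wP [wv H]] := nonclean_facts ncl.
have {}Min := Min w wP wv.
move: Iv; rewrite /Inv.
case: H => [[Hs [E [Cw Hw]]] | [Hs [E [Cw Hw]]]].
- have := Min; rewrite E => /(_ Cw); rewrite !bproj1 => ?.
  move: Cv'; rewrite E inC1 => /andP[? ?].
  move: Cw; rewrite inC1 => /andP[? ?].
  case: (ltrP (q.1+q.2) 0) => H1 /=; first by case=> *; split; lra.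
  case: (ltrP 0 (q.1+q.2)) => H2 /=; first by case=> *; lra.
  by move=> Ev; rewrite {}Ev in Hs; rewrite leNgt Hs in H1.
- have := Min; rewrite E => /(_ Cw); rewrite !bproj3 => ?.
  move: Cv'; rewrite E inC3 => /andP[? ?].
  move: Cw; rewrite inC3 => /andP[? ?].
  case: (ltrP (q.1+q.2) 0) => H1 /=; first by case=> *; lra.
  case: (ltrP 0 (q.1+q.2)) => H2 /=; first by case=> *; split; lra.
  by move=> Ev; rewrite {}Ev in Hs; rewrite leNgt Hs in H2.
Qed.

Lemma greedy_edges_cons P y z vs :
  greedy_edges P y (z :: vs) =
  if clean P y then (y, z) :: greedy_edges P z vs else greedy_edges P z vs.
Proof. by []. Qed.

Lemma step_in_P P nb t x z : t \in P -> theta4_graph P nb -> x \in P ->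
  route_step P nb t x z -> z \in P.
Proof.
move=> tP th xP /andP [xt]; case: ifP => cl.
  case/existsP => i /andP [Ci /eqP ->].
  have [] := th x i xP; last by [].
  by exists t; split => //; rewrite eq_sym.
by move/eqP => ->; case: (sweep_nb th xP (negbT cl)).
Qed.

Lemma chain_first P nb t q y vs : t \in P -> theta4_graph P nb -> y \in P -> Inv q y ->
  path (route_step P nb t) y vs -> (0 < size (greedy_edges P y vs))%N ->
  Inv q (nth (0, 0) (greedy_edges P y vs) 0).1.
Proof.
move=> tP th; elim: vs y => [|z vs IH] y yP Iy //=.
rewrite greedy_edges_cons => /andP [st pth].
case: ifP => cl //.
have zP := step_in_P tP th yP st.
move: st; rewrite /route_step cl /= => /andP [_ /eqP Ez].
apply: IH => //; rewrite Ez; exact: Inv_step th yP (negbT cl) Iy.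
Qed.

Lemma gs_pairs P nb t x vs : t \in P -> theta4_graph P nb -> x \in P ->
  path (route_step P nb t) x vs ->
  forall j, (j.+1 < size (greedy_edges P x vs))%N ->
  [/\ clean P (nth (0,0) (greedy_edges P x vs) j).1,
      (nth (0,0) (greedy_edges P x vs) j).1 \in P,
      route_step P nb t (nth (0,0) (greedy_edges P x vs) j).1
                        (nth (0,0) (greedy_edges P x vs) j).2 &
      Inv (nth (0,0) (greedy_edges P x vs) j).2
          (nth (0,0) (greedy_edges P x vs) j.+1).1].
Proof.
move=> tP th; elim: vs x => [|z vs IH] x xP //=.
rewrite greedy_edges_cons => /andP [st pth] j.
have zP := step_in_P tP th xP st.
case: ifP => cl; last by move=> Hj; apply: IH.
case: j => [|j] /= Hj; last by apply: IH.
split => //.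
exact: (chain_first tP th zP (Inv_refl z) pth Hj).
Qed.

Lemma lbn (x : R) : x <= `|x| /\ - x <= `|x|.
Proof. by split; [exact: ler_norm | rewrite -normrN; exact: ler_norm]. Qed.

Lemma arith (p q : R * R) X :
  (p.1 <= q.1 /\ q.2 <= p.2 \/ q.1 <= p.1 /\ p.2 <= q.2) ->
  X <= `|q.1 + q.2| ->
  L1 p q + X - L1 p (bar p) <= 2%:R * L1 (bar p) (bar q).
Proof.
rewrite /L1 /bar /= => H HX.
have [? ?] := lbn ((p.1 - p.2) / 2%:R - (q.1 - q.2) / 2%:R).
have [? ?] := lbn ((p.2 - p.1) / 2%:R - (q.2 - q.1) / 2%:R).
have [? ?] := lbn (p.1 - (p.1 - p.2) / 2%:R).
have [? ?] := lbn (p.2 - (p.2 - p.1) / 2%:R).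
case: H => [[? ?]|[? ?]]; move: HX;
  case: (ger0P (p.1 - q.1)) => ?; case: (ger0P (p.2 - q.2)) => ?;
  case: (ger0P (q.1 + q.2)) => ? ?; lra.
Qed.

Lemma final P nb t p q p' : t = (0, 0) -> t \in P -> theta4_graph P nb ->
  clean P p -> p \in P -> route_step P nb t p q -> Inv q p' ->
  Phi p q p' <= 2%:R * L1 (bar p) (bar q).
Proof.
move=> Et tP th cl pP st Iq.
move: st; rewrite /route_step cl /= => /andP [pt /existsP [i /andP [Ci /eqP Eq]]].
have [_ _ Cq _] : is_nb P p i q.
  by rewrite Eq; apply: th => //; exists t; split => //; rewrite eq_sym.
clear Eq.
have HX := Inv_L1 Iq.
have Hcl := allP cl t tP; rewrite eq_sym (negbTE pt) /= in Hcl.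
rewrite /Phi; apply: arith HX.
subst t; move: p pt cl pP Hcl Ci Cq => [a b] pt _ _ Hcl Ci Cq.
rewrite /inT /= in Hcl.
case: i Ci Cq => [[|[|[|[|k]]]] Hi] //; rewrite /inC /= => Ci Cq.
- by move/andP: Cq => [? ?]; left.
- exfalso; move/andP: Ci => [? ?]; move: Hcl.
  case: (ltrP (a+b) 0) => H1 /=.
    by rewrite inC1 /= addr0 lexx !andbT; move/negP; apply; apply/andP.
  case: (ltrP 0 (a+b)) => H2 /=; first lra.
  have Ha : a = 0 by lra.
  have Hb : b = 0 by lra.
  by rewrite Ha Hb eqxx in pt.
- by move/andP: Cq => [? ?]; right.
- exfalso; move/andP: Ci => [? ?]; move: Hcl.
  case: (ltrP (a+b) 0) => H1 /=; first lra.
  case: (ltrP 0 (a+b)) => H2 /=.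
    by rewrite inC3 /= addr0 lexx !andbT; move/negP; apply; apply/andP.
  have Ha : a = 0 by lra.
  have Hb : b = 0 by lra.
  by rewrite Ha Hb eqxx in pt.
Qed.
End Aux.

Theorem lemma4 (R : realFieldType) (P : seq (R * R)) (s t : R * R)
    (nb : R * R -> 'I_4 -> R * R) (vs : seq (R * R)) :
  s \in P -> t \in P -> s != t ->
  t = (0, 0) ->
  s.1 <= 0 -> 0 <= s.2 -> s.1 + s.2 < 0 ->
  theta4_graph P nb ->
  path (route_step P nb t) s vs -> last s vs = t ->
  forall j : nat, (j.+1 < size (greedy_edges P s vs))%N ->
    let gs := greedy_edges P s vs in
    let p := (nth (0, 0) gs j).1 in
    let q := (nth (0, 0) gs j).2 in
    let p' := (nth (0, 0) gs j.+1).1 in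
    Phi p q p' <= 2%:R * L1 (bar p) (bar q).
Proof.
move=> sP tP _ Et _ _ _ th pth _ j Hj; cbv zeta.
have [cl pP st Iq] := gs_pairs tP th sP pth Hj.
exact: (final Et tP th cl pP st Iq).
Qed.
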